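(* Consider MDVI$(\alpha,K,M)$ with any $\alpha\in[0,1)$ and any positive integers $K,M$, on an MDP as in the context. Then, for every realization of the samples and every $k\in\{1,\dots,K\}$, $$0 \leq v^* - v^{\pi'_k} \leq \Gamma_k,\qquad \Gamma_k := \frac{1}{A_\infty}\sum_{j=0}^{k-1}\gamma^j\left(\pi_k P_{k-j}^{k-1} - \pi_* P_*^j\right)E_{k-j} + 2H\left(\alpha^k + \frac{A_{\gamma,k}}{A_\infty}\right)\mathbf{1},$$ where inequalities between vectors are componentwise.
   Context: MDP: finite state set $\mathcal{X}$, finite action set $\mathcal{A}$, discount $\gamma\in[0,1)$, reward $r \in [-1,1]^{\mathcal{X}\times\mathcal{A}}$, transition kernel $P(y|x,a)$, $H=1/(1-\gamma)$. $P$ is viewed as a matrix in $\mathbb{R}^{(\mathcal{X}\times\mathcal{A})\times\mathcal{X}}$, $(Pv)(x,a)=\sum_yP(y|x,a)v(y)$; a policy $\pi$ is viewed as a matrix in $\mathbb{R}^{\mathcal{X}\times(\mathcal{X}\times\mathcal{A})}$, $(\pi q)(x)=\sum_a\pi(a|x)q(x,a)$; $P^\pi := P\pi$; $T^\pi q = r+\gamma P^\pi q$; $q^\pi$ its fixed point, $v^\pi=\pi q^\pi$; $\pi_*$ is an optimal policy, $v^*=v^{\pi_*}$. $\mathbf{1}$ is the all-ones vector. MDVI$(\alpha,K,M)$: $s_0 = 0$, $w_0=w_{-1}=0$; for $k=0,\dots,K-1$: $v_k = w_k-\alpha w_{k-1}$; for each $(x,a)$, independent samples $y_{k,m,x,a}\sim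 P(\cdot|x,a)$, $m\in[M]$; $q_{k+1}(x,a) = r(x,a)+\frac{\gamma}{M}\sum_m v_k(y_{k,m,x,a})$; $s_{k+1}=q_{k+1}+\alpha s_k$; $w_{k+1}(x)=\max_a s_{k+1}(x,a)$. $\pi_k$ ($k=0,\dots,K$) is a deterministic greedy policy w.r.t. $s_k$. Notation: $\widehat P_k v(x,a) = \frac1M\sum_m v(y_{k,m,x,a})$; $\varepsilon_k = \gamma\widehat P_{k-1}v_{k-1} - \gamma P v_{k-1}$ for $k\in[K]$; $E_k = \sum_{j=1}^k \alpha^{k-j}\varepsilon_j$. $A_\infty = 1/(1-\alpha)$, $A_{\gamma,k} = \sum_{j=0}^{k-1}\gamma^{k-j}\alpha^j$. For $i\ge j$, $P_j^i := P^{\pi_i}P^{\pi_{i-1}}\cdots P^{\pi_j}$, and $P_j^i := I$ if $i<j$; $P_*^j := (P^{\pi_*})^j$. $\pi'_k$ is the non-stationary policy following $\pi_{k-t}$ at time step $t\le k$ and $\pi_0$ afterwards, with value $v^{\pi'_k} = \pi_kT^{\pi_{k-1}}\cdots T^{\pi_1}q^{\pi_0}$. *)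

(* Defs.v *)
From HB Require Import structures.
From mathcomp Require Import all_boot all_order all_algebra.
From mathcomp Require Import all_classical all_reals all_analysis.
Set Implicit Arguments. Unset Strict Implicit. Unset Printing Implicit Defensive.
Import Order.TTheory GRing.Theory Num.Theory numFieldNormedType.Exports.
Local Open Scope ring_scope.

Section MDP.
Variables (R : realType) (X A : finType).

(* transition kernel: P x a y = P(y | x, a); policy: pi x a = pi(a | x) *)

Definition Papp (P : X -> A -> X -> R) (v : X -> R) : X -> A -> R :=
  fun x a => \sum_(y : X) P x a y * v y.

Definition polapp (pi : X -> A -> R) (q : X -> A -> R) : X -> R :=
  fun x => \sum_(a : A) pi x a * q x a.

Definition Ppi (P : X -> A -> X -> R) (pi : X -> A -> R) (q : X -> A -> R) :
  X -> A -> R := Papp P (polapp pi q).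

Definition Tpi (P : X -> A -> X -> R) (r : X -> A -> R) (gamma : R)
  (pi : X -> A -> R) (q : X -> A -> R) : X -> A -> R :=
  fun x a => r x a + gamma * Ppi P pi q x a.

(* q^pi: fixed point of T^pi, obtained as the (pointwise) limit of value
   iteration started from 0, i.e. the discounted sum of rewards. *)
Definition qpi P r gamma (pi : X -> A -> R) : X -> A -> R :=
  fun x a => limn (fun n : nat => iter n (Tpi P r gamma pi) (fun _ _ => 0) x a).

Definition vpi P r gamma (pi : X -> A -> R) : X -> R :=
  polapp pi (qpi P r gamma pi).

Definition is_policy (pi : X -> A -> R) : Prop :=
  (forall x a, 0 <= pi x a) /\ (forall x, \sum_(a : A) pi x a = 1).

Definition is_kernel (P : X -> A -> X -> R) : Prop :=
  (forall x a y, 0 <= P x a y) /\ (forall x a, \sum_(y : X) P x a y = 1).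

Definition is_optimal P r gamma (pistar : X -> A -> R) : Prop :=
  is_policy pistar /\
  forall pi, is_policy pi -> forall x, vpi P r gamma pi x <= vpi P r gamma pistar x.

Definition detpol (d : X -> A) : X -> A -> R :=
  fun x a => if a == d x then 1 else 0.

(* max over actions (a0 only witnesses A nonempty; the value is the max) *)
Definition maxA (a0 : A) (s : X -> A -> R) : X -> R :=
  fun x => \big[Num.max/s x a0]_(a : A) s x a.

Variables (P : X -> A -> X -> R) (r : X -> A -> R) (gamma alpha : R)
          (M : nat) (a0 : A)
          (y : nat -> 'I_M -> X -> A -> X).

Definition Phat (k : nat) (v : X -> R) : X -> A -> R :=
  fun x a => M%:R^-1 * \sum_(m : 'I_M) v (y k m x a).

(* mdvi_state k = (s_k, w_k, w_{k-1}) *)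
Fixpoint mdvi_state (k : nat) : (X -> A -> R) * (X -> R) * (X -> R) :=
  match k with
  | 0 => (fun _ _ => 0, fun _ => 0, fun _ => 0)
  | k'.+1 =>
      let: (s, w, wp) := mdvi_state k' in
      let v := fun x => w x - alpha * wp x in
      let q := fun x a => r x a + gamma * Phat k' v x a in
      let s' := fun x a => q x a + alpha * s x a in
      (s', maxA a0 s', w)
  end.

Definition s_ k := (mdvi_state k).1.1.
Definition w_ k := (mdvi_state k).1.2.
Definition wprev_ k := (mdvi_state k).2.
Definition v_ k : X -> R := fun x => w_ k x - alpha * wprev_ k x.

Definition eps_ (k : nat) : X -> A -> R :=
  fun x a => gamma * Phat k.-1 (v_ k.-1) x a - gamma * Papp P (v_ k.-1) x a.

Definition E_ (k : nat) : X -> A -> R :=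
  fun x a => \sum_(1 <= j < k.+1) alpha ^+ (k - j) * eps_ j x a.

Definition A_inf : R := (1 - alpha)^-1.
Definition A_gk (k : nat) : R := \sum_(0 <= j < k) gamma ^+ (k - j) * alpha ^+ j.
Definition H : R := (1 - gamma)^-1.

Variable (g : nat -> X -> A).
Definition pol_ k := detpol (g k).

(* Pchain j n = P^{pi_{j+n-1}} ... P^{pi_j}; so P_j^i = Pchain j (i+1-j) *)
Fixpoint Pchain (j n : nat) (q : X -> A -> R) : X -> A -> R :=
  match n with
  | 0 => q
  | n'.+1 => Ppi P (pol_ (j + n')) (Pchain j n' q)
  end.

Fixpoint Tchain (n : nat) (q : X -> A -> R) : X -> A -> R :=
  match n with
  | 0 => q
  | n'.+1 => Tpi P r gamma (pol_ n'.+1) (Tchain n' q)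
  end.

(* v^{pi'_k} = pi_k T^{pi_{k-1}} ... T^{pi_1} q^{pi_0} *)
Definition v_nonstat (k : nat) : X -> R :=
  polapp (pol_ k) (Tchain k.-1 (qpi P r gamma (pol_ 0))).

Variable (pistar : X -> A -> R).

Definition Gamma_ (k : nat) : X -> R :=
  fun x =>
    A_inf^-1 * \sum_(0 <= j < k) gamma ^+ j *
       (polapp (pol_ k) (Pchain (k - j) j (E_ (k - j))) x
        - polapp pistar (iter j (Ppi P pistar) (E_ (k - j))) x)
    + 2 * H * (alpha ^+ k + A_gk k / A_inf).

End MDP.

(* Main.v *)
Require Import Defs.
From HB Require Import structures.
From mathcomp Require Import all_boot all_order all_algebra.
From mathcomp Require Import all_classical all_reals all_analysis.
From mathcomp Require Import ring lra zify.
Import Order.TTheory GRing.Theory Num.Theory numFieldNormedType.Exports.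
Local Open Scope ring_scope.
Set Implicit Arguments. Unset Strict Implicit. Unset Printing Implicit Defensive.
Section Ana.
Variable R : realType.

Lemma geom_sum_le (g : R) n : 0 <= g < 1 ->
  \sum_(0 <= j < n) g ^+ j <= (1 - g)^-1.
Proof.
move=> /andP[g0 g1].
have h : (1 - g) * \sum_(0 <= j < n) g ^+ j = 1 - g ^+ n.
  elim: n => [|n IH]; first by rewrite big_geq // expr0 mulr0 subrr.
  by rewrite big_nat_recr //= mulrDr IH exprS; ring.
have g1' : 0 < 1 - g by rewrite subr_gt0.
rewrite -(ler_pM2l g1') h mulfV ?gt_eqF //.
by rewrite gerBl exprn_ge0.
Qed.

Lemma cvg_contract (u : nat -> R) (c g : R) : 0 <= g < 1 -> 0 <= c ->
  (forall n, `|u n.+1 - u n| <= c * g ^+ n) ->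
  cvgn u /\ forall n, `|limn u - u n| <= c * g ^+ n * (1 - g)^-1.
Proof.
move=> /andP[g0 g1] c0 hu.
have tel : forall n m, `|u (n + m)%N - u n| <= c * g ^+ n * \sum_(0 <= j < m) g ^+ j.
  move=> n; elim=> [|m IH]; first by rewrite addn0 subrr normr0 big_geq // mulr0.
  rewrite addnS big_nat_recr //= mulrDr.
  have := hu (n + m)%N; rewrite exprD mulrA => h1.
  by rewrite (le_trans (ler_distD (u (n+m)%N) _ _)) // addrC lerD // distrC.
have telB : forall n m, (n <= m)%N -> `|u m - u n| <= c * g ^+ n * (1 - g)^-1.
  move=> n m /subnKC <-; apply: (le_trans (tel n (m - n)%N)).
  by rewrite ler_wpM2l ?mulr_ge0 ?exprn_ge0 // geom_sum_le // g0 g1.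
set S := fun n => \sum_(0 <= j < n) g ^+ j.
have Snd : nondecreasing_seq S.
  move=> n m /subnKC <-; rewrite /S (big_cat_nat _ (leq_addr _ _)) //= lerDl.
  by apply: sumr_ge0 => i _; rewrite exprn_ge0.
have Scv : cvgn S.
  apply: nondecreasing_is_cvgn => //; exists ((1 - g)^-1) => _ [n _ <-].
  by apply: geom_sum_le; rewrite g0 g1.
have wcv : cvgn (fun n => u n + c * S n).
  apply: nondecreasing_is_cvgn.
    move=> n m /subnKC <-; elim: (m - n)%N => [|k IH]; first by rewrite addn0.
    apply: (le_trans IH); rewrite addnS /S big_nat_recr //= mulrDr addrA.
    have := hu (n + k)%N; rewrite ler_norml => /andP[h1 _].
    lra.
  exists (u 0%N + 2 * c * (1 - g)^-1) => _ [n _ <-].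
  have := telB 0%N n isT; rewrite expr0 mulr1 ler_distlC => /andP[h _].
  have hS : c * S n <= c * (1 - g)^-1 by rewrite ler_wpM2l // geom_sum_le // g0 g1.
  lra.
have ucv : cvgn u.
  have -> : u = (fun n => u n + c * S n) - (fun n => c * S n).
    by apply/funext => n /=; rewrite addrK.
  apply: is_cvgB => //; exact: is_cvgMl_tmp.
split => // n; rewrite ler_distl; apply/andP; split.
  apply: limr_ge => //; near=> m.
  have := telB n m; rewrite ler_distl => /(_ _)/andP[].
    by near: m; exists n.
  by [].
apply: limr_le => //; near=> m.
have := telB n m; rewrite ler_distl => /(_ _)/andP[].
  by near: m; exists n.
by [].
Unshelve. all: by end_near.
Qed.
End Ana.


Section Ops.
Variables (R : realType) (X A : finType).
Variable (P : X -> A -> X -> R).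
Hypothesis hP : is_kernel P.

Implicit Types (q : X -> A -> R) (v : X -> R) (pi : X -> A -> R).

Lemma Papp_lin c1 c2 v1 v2 :
  Papp P (fun z => c1 * v1 z + c2 * v2 z) = fun x a => c1 * Papp P v1 x a + c2 * Papp P v2 x a.
Proof.
apply/funext => x; apply/funext => a; rewrite /Papp !mulr_sumr -big_split /=.
by apply: eq_bigr => i _; ring.
Qed.

Lemma Papp_mono v1 v2 : (forall z, v1 z <= v2 z) -> forall x a, Papp P v1 x a <= Papp P v2 x a.
Proof.
move=> h x a; apply: ler_sum => i _; apply: ler_wpM2l => //; exact: hP.1.
Qed.

Lemma Papp_cst c x a : Papp P (fun _ => c) x a = c.
Proof. by rewrite /Papp -mulr_suml hP.2 mul1r. Qed.

Lemma polapp_lin pi c1 c2 q1 q2 :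
  polapp pi (fun x a => c1 * q1 x a + c2 * q2 x a) = fun x => c1 * polapp pi q1 x + c2 * polapp pi q2 x.
Proof.
apply/funext => x; rewrite /polapp !mulr_sumr -big_split /=.
by apply: eq_bigr => i _; ring.
Qed.

Lemma polapp_mono pi : is_policy pi -> forall q1 q2, (forall x a, q1 x a <= q2 x a) ->
  forall x, polapp pi q1 x <= polapp pi q2 x.
Proof.
move=> hpi q1 q2 h x; apply: ler_sum => i _; apply: ler_wpM2l => //; exact: hpi.1.
Qed.

Lemma polapp_cst pi c x : is_policy pi -> polapp pi (fun _ _ => c) x = c.
Proof. by move=> hpi; rewrite /polapp -mulr_suml hpi.2 mul1r. Qed.

Lemma detpol_app (d : X -> A) q x : polapp (detpol R d) q x = q x (d x).
Proof.
rewrite /polapp (bigD1 (d x)) //= /detpol eqxx mul1r big1 ?addr0 //.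
by move=> i /negbTE ->; rewrite mul0r.
Qed.

Lemma detpol_policy (d : X -> A) : is_policy (detpol R d).
Proof.
split; first by move=> x a; rewrite /detpol; case: ifP.
move=> x; have := detpol_app d (fun _ _ => 1) x; rewrite /polapp.
by under eq_bigr do rewrite mulr1.
Qed.

Definition lin (L : (X -> A -> R) -> X -> A -> R) :=
  forall c1 c2 q1 q2, L (fun x a => c1 * q1 x a + c2 * q2 x a) = fun x a => c1 * L q1 x a + c2 * L q2 x a.
Definition mono (L : (X -> A -> R) -> X -> A -> R) :=
  forall q1 q2, (forall x a, q1 x a <= q2 x a) -> forall x a, L q1 x a <= L q2 x a.
Definition cstp (L : (X -> A -> R) -> X -> A -> R) :=
  forall c, L (fun _ _ => c) = fun _ _ => c.
Definition good L := [/\ lin L, mono L & cstp L].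

Lemma Ppi_good pi : is_policy pi -> good (Ppi P pi).
Proof.
move=> hpi; split.
- by move=> c1 c2 q1 q2; rewrite /Ppi polapp_lin Papp_lin.
- move=> q1 q2 h x a; apply: Papp_mono; exact: polapp_mono.
- move=> c; rewrite /Ppi; apply/funext => x; apply/funext => a.
  rewrite (_ : polapp pi _ = fun _ => c) ?Papp_cst //.
  by apply/funext => z; rewrite polapp_cst.
Qed.

Lemma good_comp L1 L2 : good L1 -> good L2 -> good (fun q => L1 (L2 q)).
Proof.
move=> [l1 m1 c1] [l2 m2 c2]; split.
- by move=> a b q1 q2; rewrite l2 l1.
- by move=> q1 q2 h; apply: m1; apply: m2.
- by move=> c; rewrite c2 c1.
Qed.

Lemma good_id : good id.
Proof. by split. Qed.

Lemma good_iter L n : good L -> good (iter n L).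
Proof.
move=> gL; elim: n => [|n IH]; first exact: good_id.
have -> : iter n.+1 L = (fun q => L (iter n L q)) by apply/funext => q.
exact: (good_comp gL IH).
Qed.

Section GoodL.
Variable L : (X -> A -> R) -> X -> A -> R.
Hypothesis gL : good L.
Lemma gL1 : lin L. Proof. by case: gL. Qed.
Lemma gL2 : mono L. Proof. by case: gL. Qed.
Lemma gL3 : cstp L. Proof. by case: gL. Qed.

Lemma goodD q1 q2 : L (fun x a => q1 x a + q2 x a) = fun x a => L q1 x a + L q2 x a.
Proof.
have := gL1 1 1 q1 q2.
rewrite (_ : (fun x a => 1 * q1 x a + 1 * q2 x a) = fun x a => q1 x a + q2 x a).
  by move=> ->; apply/funext => x; apply/funext => a; rewrite !mul1r.
by apply/funext => x; apply/funext => a; rewrite !mul1r.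
Qed.

Lemma goodZ c q : L (fun x a => c * q x a) = fun x a => c * L q x a.
Proof.
have := gL1 c 0 q q.
rewrite (_ : (fun x a => c * q x a + 0 * q x a) = fun x a => c * q x a).
  by move=> ->; apply/funext => x; apply/funext => a; rewrite mul0r addr0.
by apply/funext => x; apply/funext => a; rewrite mul0r addr0.
Qed.

Lemma goodB q1 q2 : L (fun x a => q1 x a - q2 x a) = fun x a => L q1 x a - L q2 x a.
Proof.
have := gL1 1 (-1) q1 q2.
rewrite (_ : (fun x a => 1 * q1 x a + -1 * q2 x a) = fun x a => q1 x a - q2 x a).
  by move=> ->; apply/funext => x; apply/funext => a; rewrite mul1r mulN1r.
by apply/funext => x; apply/funext => a; rewrite mul1r mulN1r.
Qed.

Lemma good0 : L (fun _ _ => 0) = fun _ _ => 0.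
Proof. exact: gL3. Qed.

Lemma goodS (I : Type) (s : seq I) (F : I -> X -> A -> R) :
  L (fun x a => \sum_(i <- s) F i x a) = fun x a => \sum_(i <- s) L (F i) x a.
Proof.
elim: s => [|i s IH].
  rewrite (_ : (fun x a => \sum_(i <- [::]) F i x a) = fun _ _ => 0).
    by rewrite good0; apply/funext => x; apply/funext => a; rewrite big_nil.
  by apply/funext => x; apply/funext => a; rewrite big_nil.
rewrite (_ : (fun x a => \sum_(j <- i :: s) F j x a) = fun x a => F i x a + \sum_(j <- s) F j x a).
  by rewrite goodD IH; apply/funext => x; apply/funext => a; rewrite big_cons.
by apply/funext => x; apply/funext => a; rewrite big_cons.
Qed.

Lemma good_bound q (B : R) : (forall x a, `|q x a| <= B) -> forall x a, `|L q x a| <= B.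
Proof.
move=> h x a; rewrite ler_norml; apply/andP; split.
- have := @gL2 (fun _ _ => - B) q; rewrite gL3 => H; apply: H.
  by move=> x1 a1; have := h x1 a1; rewrite ler_norml => /andP[].
- have := @gL2 q (fun _ _ => B); rewrite gL3 => H; apply: H.
  by move=> x1 a1; have := h x1 a1; rewrite ler_norml => /andP[].
Qed.

End GoodL.
End Ops.


Section Q.
Variables (R : realType) (X A : finType).
Variables (P : X -> A -> X -> R) (r : X -> A -> R) (gamma : R).
Hypothesis hP : is_kernel P.
Hypothesis hr : forall x a, -1 <= r x a <= 1.
Hypothesis hg : 0 <= gamma < 1.

Lemma zero_geom (z C : R) : (forall n, `|z| <= C * gamma ^+ n) -> z = 0.
Proof.
move=> h; apply/normr0_eq0/eqP; rewrite eq_le normr_ge0 andbT.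
have g1 : `|gamma| < 1 by rewrite ger0_norm; case/andP: hg.
have cv := cvg_geometric C g1.
have <- : limn (geometric C gamma) = 0 by apply: cvg_lim.
apply: limr_ge; first by apply: cvgP cv.
by near=> n; rewrite /geometric /=; apply: h.
Unshelve. all: by end_near.
Qed.

Lemma Tpi_diff pi q1 q2 x a : is_policy pi ->
  Tpi P r gamma pi q1 x a - Tpi P r gamma pi q2 x a
  = gamma * Ppi P pi (fun x a => q1 x a - q2 x a) x a.
Proof.
move=> hpi; rewrite (goodB (Ppi_good hP hpi)) /Tpi; ring.
Qed.

Section Pol.
Variable pi : X -> A -> R.
Hypothesis hpi : is_policy pi.

Let u n := iter n (Tpi P r gamma pi) (fun _ _ => 0).

Lemma u_step n x a : `|u n.+1 x a - u n x a| <= gamma ^+ n.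
Proof.
elim: n x a => [|n IH] x a.
  rewrite /u /= /Tpi (good0 (Ppi_good hP hpi)) mulr0 addr0 subr0 expr0.
  by rewrite ler_norml; apply: hr.
rewrite (_ : u n.+2 x a = Tpi P r gamma pi (u n.+1) x a) //.
rewrite (_ : u n.+1 x a = Tpi P r gamma pi (u n) x a) //.
rewrite Tpi_diff // normrM exprS.
rewrite ger0_norm; last by case/andP: hg.
apply: ler_wpM2l; first by case/andP: hg.
by apply: (good_bound (Ppi_good hP hpi)) => x1 a1; apply: IH.
Qed.

Lemma qpi_near x a n : `|qpi P r gamma pi x a - u n x a| <= gamma ^+ n * H gamma.
Proof.
have [_ h] := cvg_contract (u:=fun n => u n x a) (c:=1) hg ler01 (fun n => (eq_ind _ (fun t => `|u n.+1 x a - u n x a| <= t) (u_step n x a) _ (esym (mul1r _)))).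
by have := h n; rewrite mul1r.
Qed.

Lemma qpi_bound x a : `|qpi P r gamma pi x a| <= H gamma.
Proof. by have := qpi_near x a 0; rewrite /u /= subr0 expr0 mul1r. Qed.

Lemma qpi_fix : qpi P r gamma pi = Tpi P r gamma pi (qpi P r gamma pi).
Proof.
apply/funext => x; apply/funext => a; apply/esym/eqP; rewrite -subr_eq0; apply/eqP.
apply: (@zero_geom _ (2 * H gamma * gamma)) => n.
set q := qpi P r gamma pi.
have -> : Tpi P r gamma pi q x a - q x a =
   (Tpi P r gamma pi q x a - Tpi P r gamma pi (u n) x a) + (u n.+1 x a - q x a).
  by rewrite /u iterS; ring.
rewrite Tpi_diff //.
apply: (le_trans (ler_normD _ _)).
have h1 : `|Ppi P pi (fun x a => q x a - u n x a) x a| <= gamma ^+ n * H gamma.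
  by apply: (good_bound (Ppi_good hP hpi)) => x1 a1; apply: qpi_near.
have h2 : `|u n.+1 x a - q x a| <= gamma ^+ n.+1 * H gamma.
  by rewrite distrC; apply: qpi_near.
have g0 : 0 <= gamma by case/andP: hg.
rewrite normrM (ger0_norm g0).
have h3 := ler_wpM2l g0 h1.
have := lerD h3 h2; rewrite exprS => h4; apply: (le_trans h4).
by rewrite le_eqVlt; apply/orP; left; apply/eqP; ring.
Qed.

End Pol.

Lemma greedy_exists (q : X -> A -> R) (a0 : A) : exists d : X -> A, forall x b, q x b <= q x (d x).
Proof.
exists (fun x => [arg max_(b > a0) q x b]%O) => x b.
by case: Order.TotalTheory.arg_maxP => // i _ Hi; apply: Hi.
Qed.

Lemma min_principle pi (f : X -> A -> R) : is_policy pi ->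
  (forall x a, gamma * Ppi P pi f x a <= f x a) -> forall x a, 0 <= f x a.
Proof.
move=> hpi h x a.
case: (@Order.TotalTheory.arg_minP _ _ _ (x, a) xpredT (fun p : X * A => f p.1 p.2)) => //.
move=> [x1 a1] _ Hm.
have hm : f x1 a1 <= Ppi P pi f x1 a1.
  have := @gL2 _ _ _ _ (Ppi_good hP hpi) (fun _ _ => f x1 a1) f.
  rewrite (gL3 (Ppi_good hP hpi)) => H; apply: H => x2 a2.
  exact: (Hm (x2, a2)).
have := h x1 a1; have g0 : 0 <= gamma by case/andP: hg.
have g1 : gamma < 1 by case/andP: hg.
move=> h1.
have hf : 0 <= f x1 a1 by nra.
exact: (le_trans hf (Hm (x, a) isT)).
Qed.

Lemma q_le_v pistar : is_optimal P r gamma pistar ->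
  forall x a, qpi P r gamma pistar x a <= vpi P r gamma pistar x.
Proof.
move=> [hps opt] x a.
set q := qpi P r gamma pistar.
have [a0 _] : exists a0 : A, True by exists a.
have [d hd] := greedy_exists q a0.
set pi' := detpol R d.
have hpi' : is_policy pi' := detpol_policy R d.
have h1 : forall z, polapp pistar q z <= polapp pi' q z.
  move=> z; rewrite detpol_app /polapp.
  rewrite (_ : q z (d z) = \sum_(b : A) pistar z b * q z (d z)).
    by apply: ler_sum => b _; apply: ler_wpM2l; [apply: hps.1|apply: hd].
  by rewrite -mulr_suml hps.2 mul1r.
set q' := qpi P r gamma pi'.
have hq' : forall x a, 0 <= q' x a - q x a.
  apply: (min_principle (pi:=pi')) => // x1 a1.
  rewrite (goodB (Ppi_good hP hpi')).
  have e1 := f_equal (fun f => f x1 a1) (qpi_fix hpi').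
  have e2 := f_equal (fun f => f x1 a1) (qpi_fix hps).
  rewrite /Tpi -/q -/q' /= in e1 e2.
  have : Ppi P pistar q x1 a1 <= Ppi P pi' q x1 a1 by apply: Papp_mono.
  have g0 : 0 <= gamma by case/andP: hg.
  move=> hh; rewrite e1 e2; nra.
have := opt pi' hpi' x; rewrite /vpi -/q -/q' detpol_app => hv.
apply: le_trans hv; apply: (le_trans (hd x a)).
by have := hq' x (d x); rewrite subr_ge0.
Qed.

End Q.


Section MD.
Variables (R : realType) (X A : finType).
Variables (P : X -> A -> X -> R) (r : X -> A -> R) (gamma alpha : R) (M K : nat) (a0 : A)
  (y : nat -> 'I_M -> X -> A -> X) (g : nat -> X -> A) (pistar : X -> A -> R).
Hypothesis hP : is_kernel P.
Hypothesis hr : forall x a, -1 <= r x a <= 1.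
Hypothesis hg : 0 <= gamma < 1.
Hypothesis ha : 0 <= alpha < 1.
Hypothesis hgreedy : forall k, (k <= K)%N -> forall x a,
      s_ r gamma alpha a0 y k x a <= s_ r gamma alpha a0 y k x (g k x).

Local Notation s := (s_ r gamma alpha a0 y).
Local Notation w := (w_ r gamma alpha a0 y).
Local Notation wp := (wprev_ r gamma alpha a0 y).
Local Notation v := (v_ r gamma alpha a0 y).
Local Notation E := (E_ P r gamma alpha a0 y).
Local Notation eps := (eps_ P r gamma alpha a0 y).
Local Notation pol := (pol_ R g).

Lemma s_succ k : s k.+1 = fun x a => r x a + gamma * Phat y k (v k) x a + alpha * s k x a.
Proof. by rewrite /s_ /v_ /w_ /wprev_ /=; case: (mdvi_state _ _ _ _ _ k) => [[s0 w0] wp0]. Qed.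

Lemma wp_succ k : wp k.+1 = w k.
Proof. by rewrite /w_ /wprev_ /=; case: (mdvi_state _ _ _ _ _ k) => [[s0 w0] wp0]. Qed.

Lemma w_def k : w k = Defs.maxA a0 (s k).
Proof. case: k => [|k].
  rewrite /w_ /s_ /= /Defs.maxA; apply/funext => x; apply/le_anti/andP; split.
    exact: (le_bigmax _ (fun _ => 0) a0).
  by apply: bigmax_le.
by rewrite /w_ /s_ /=; case: (mdvi_state _ _ _ _ _ k) => [[s0 w0] wp0]. Qed.

Lemma s0E : s 0 = fun _ _ => 0. Proof. by []. Qed.
Lemma wp0E : wp 0 = fun _ => 0. Proof. by []. Qed.

Lemma E_succ k : E k.+1 = fun x a => eps k.+1 x a + alpha * E k x a.
Proof.
apply/funext => x; apply/funext => a; rewrite /E_ big_nat_recr //= subnn expr0 mul1r addrC.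
congr (_ + _); rewrite mulr_sumr; apply: eq_big_nat => j /andP[_ hj].
by rewrite subSn // exprS mulrA.
Qed.

Definition Ak m : R := \sum_(0 <= j < m) alpha ^+ j.

Lemma Ak_succ m : Ak m.+1 = 1 + alpha * Ak m.
Proof. by rewrite /Ak big_nat_recl // expr0 mulr_sumr; congr (_ + _); apply: eq_bigr => j _; rewrite exprS. Qed.

Lemma Ak_eq m : Ak m * (1 - alpha) = 1 - alpha ^+ m.
Proof.
elim: m => [|m IH]; first by rewrite /Ak big_geq // mul0r expr0 subrr.
rewrite Ak_succ exprS.
have -> : alpha ^+ m = 1 - Ak m * (1 - alpha) by rewrite IH; ring.
ring.
Qed.

Lemma s_form k : s k = fun x a => Ak k * r x a + gamma * Papp P (wp k) x a + E k x a.
Proof.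
elim: k => [|k IH].
  apply/funext => x; apply/funext => a.
  by rewrite s0E wp0E Papp_cst // /E_ big_geq // /Ak big_geq // !mul0r mulr0 !addr0.
rewrite s_succ IH E_succ wp_succ; apply/funext => x; apply/funext => a.
have he : eps k.+1 x a = gamma * Phat y k (v k) x a - gamma * Papp P (v k) x a by [].
have hv : Papp P (v k) x a = Papp P (w k) x a - alpha * Papp P (wp k) x a.
  have := Papp_lin P 1 (- alpha) (w k) (wp k).
  rewrite (_ : (fun z => 1 * w k z + - alpha * wp k z) = v k).
    by move=> ->; ring.
  by apply/funext => z; rewrite /v_; ring.
rewrite Ak_succ he hv; ring.
Qed.

Lemma w_greedy k : (k <= K)%N -> w k = polapp (pol k) (s k).
Proof.
move=> hk; apply/funext => x; rewrite w_def detpol_app /Defs.maxA.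
apply/le_anti/andP; split.
  by apply: bigmax_le => // [|i _]; apply: hgreedy.
exact: le_bigmax.
Qed.

Definition F k := fun x a => Ak k * r x a + E k x a.

Lemma s_rec k : (1 <= k <= K)%N ->
  s k = fun x a => F k x a + gamma * Ppi P (pol k.-1) (s k.-1) x a.
Proof.
case: k => [//|k] /andP[_ hk]; rewrite s_form wp_succ w_greedy; last by apply: ltnW.
apply/funext => x; apply/funext => a; rewrite /F /Ppi /=; ring.
Qed.

End MD.


Section MD2.
Variables (R : realType) (X A : finType).
Variables (P : X -> A -> X -> R) (r : X -> A -> R) (gamma alpha : R) (M K : nat) (a0 : A)
  (y : nat -> 'I_M -> X -> A -> X) (g : nat -> X -> A) (pistar : X -> A -> R).
Hypothesis hP : is_kernel P.
Hypothesis hr : forall x a, -1 <= r x a <= 1.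
Hypothesis hg : 0 <= gamma < 1.
Hypothesis ha : 0 <= alpha < 1.
Hypothesis hgreedy : forall k, (k <= K)%N -> forall x a,
      s_ r gamma alpha a0 y k x a <= s_ r gamma alpha a0 y k x (g k x).
Hypothesis hps : is_policy pistar.

Local Notation s := (s_ r gamma alpha a0 y).
Local Notation E := (E_ P r gamma alpha a0 y).
Local Notation pol := (pol_ R g).
Local Notation F := (F P r gamma alpha a0 y).
Local Notation PS := (Ppi P pistar).

Lemma hpol k : is_policy (pol k). Proof. exact: detpol_policy. Qed.

Lemma Pchain_good j n : good (Pchain P g j n).
Proof.
elim: n => [|n IH]; first exact: good_id.
have -> : Pchain P g j n.+1 = (fun q => Ppi P (pol (j + n)) (Pchain P g j n q)) by [].
exact: (good_comp (Ppi_good hP (hpol _)) IH).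
Qed.

Lemma Pchain_S j n q : Pchain P g j n.+1 q = Ppi P (pol (j + n)) (Pchain P g j n q).
Proof. by []. Qed.

Lemma s_unroll k : (k <= K)%N ->
  s k = fun x a => \sum_(0 <= j < k) gamma ^+ j * Pchain P g (k - j) j (F (k - j)) x a.
Proof.
elim: k => [|k IH] hk.
  by apply/funext => x; apply/funext => a; rewrite s0E big_geq.
rewrite (s_rec hP hgreedy) ?hk // /= IH ?(ltnW hk) //.
rewrite (goodS (Ppi_good hP (hpol k)) (index_iota 0 k)
   (fun j x a => gamma ^+ j * Pchain P g (k - j) j (F (k - j)) x a)).
apply/funext => x; apply/funext => a.
rewrite big_nat_recl // subn0 expr0 mul1r /=; congr (_ + _).
rewrite mulr_sumr; apply: eq_big_nat => j /andP[_ hj].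
rewrite (goodZ (Ppi_good hP (hpol k))) subSS /= subnK ?(ltnW hj) //.
by rewrite exprS mulrA.
Qed.

Lemma s_lower k : (k <= K)%N -> forall x a,
  \sum_(0 <= j < k) gamma ^+ j * iter j PS (F (k - j)) x a <= s k x a.
Proof.
elim: k => [|k IH] hk x a.
  by rewrite s0E big_geq.
rewrite (s_rec hP hgreedy) ?hk // big_nat_recl // subn0 expr0 mul1r.
rewrite lerD2l.
have g0 : 0 <= gamma by case/andP: hg.
have h1 : PS (s k) x a <= Ppi P (pol k) (s k) x a.
  apply: Papp_mono => // z; rewrite detpol_app; rewrite /polapp.
  rewrite (_ : s k z (g k z) = \sum_(b : A) pistar z b * s k z (g k z)).
    apply: ler_sum => b _; apply: ler_wpM2l; first exact: hps.1.
    exact: hgreedy (ltnW hk) z b.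
  by rewrite -mulr_suml hps.2 mul1r.
have h2 : PS (fun x a => \sum_(0 <= j < k) gamma ^+ j * iter j PS (F (k - j)) x a) x a
          <= PS (s k) x a.
  apply: (gL2 (Ppi_good hP hps)) => x1 a1; exact: IH (ltnW hk) x1 a1.
rewrite (goodS (Ppi_good hP hps) (index_iota 0 k)
   (fun j x a => gamma ^+ j * iter j PS (F (k - j)) x a)) in h2.
have h3 := le_trans h2 h1.
apply: le_trans (ler_wpM2l g0 h3).
rewrite mulr_sumr le_eqVlt; apply/orP; left; apply/eqP.
apply: eq_big_nat => j /andP[_ hj].
by rewrite (goodZ (Ppi_good hP hps)) subSS exprS mulrA.
Qed.

End MD2.


Section Alg.
Variable R : realType.
Variables (gamma alpha : R).

Definition Bk k : R := \sum_(0 <= j < k) gamma ^+ j * alpha ^+ (k - j).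

Lemma Agk_i k : alpha * A_gk gamma alpha k = gamma * Bk k.
Proof.
rewrite /A_gk /Bk !mulr_sumr big_nat_rev /=.
apply: eq_big_nat => j /andP[_ hj].
rewrite add0n.
have e1 : (k - (k - j.+1))%N = j.+1 by lia.
have e2 : (k - j.+1).+1 = (k - j)%N by lia.
by rewrite e1 -e2 !exprS; ring.
Qed.

Lemma Agk_ii k : Bk k + gamma ^+ k = A_gk gamma alpha k + alpha ^+ k.
Proof.
have -> : Bk k + gamma ^+ k = \sum_(0 <= j < k.+1) gamma ^+ j * alpha ^+ (k - j).
  by rewrite big_nat_recr //= subnn expr0 mulr1.
have -> : A_gk gamma alpha k + alpha ^+ k = \sum_(0 <= j < k.+1) gamma ^+ (k - j) * alpha ^+ j.
  by rewrite big_nat_recr //= subnn expr0 mul1r.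
rewrite big_nat_rev /=; apply: eq_big_nat => j /andP[_ hj].
rewrite add0n.
have e1 : (k - (k.+1 - j.+1))%N = j by lia.
by rewrite e1 subSS mulrC.
Qed.

End Alg.

Section Alg2.
Variable R : realType.
Variables (gamma alpha : R).
Hypothesis hg : 0 <= gamma < 1.
Hypothesis ha : 0 <= alpha < 1.

Lemma final_alg k (Ur Lr UE LE : nat -> R) (T1 T2 vs vp skU skL : R) :
  skU = \sum_(0 <= j < k) gamma ^+ j * (Ak alpha (k - j) * Ur j + UE j) ->
  \sum_(0 <= j < k) gamma ^+ j * (Ak alpha (k - j) * Lr j + LE j) <= skL ->
  skL <= skU ->
  vs = \sum_(0 <= j < k) gamma ^+ j * Lr j + gamma ^+ k * T1 -> T1 <= H gamma ->
  vp = \sum_(0 <= j < k) gamma ^+ j * Ur j + gamma ^+ k * T2 -> - H gamma <= T2 ->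
  (forall j, `|Ur j| <= 1) -> (forall j, `|Lr j| <= 1) ->
  vs - vp <= (A_inf alpha)^-1 * \sum_(0 <= j < k) gamma ^+ j * (UE j - LE j)
             + 2 * H gamma * (alpha ^+ k + A_gk gamma alpha k / A_inf alpha).
Proof.
move=> h1 h2 h3 h4 hT1 h5 hT2 hU hL.
have g0 : 0 <= gamma by case/andP: hg.
have g1 : gamma < 1 by case/andP: hg.
have a0 : 0 <= alpha by case/andP: ha.
have a1 : alpha < 1 by case/andP: ha.
set D := fun j => gamma ^+ j * (Ak alpha (k - j) * (Ur j - Lr j) + (UE j - LE j)).
have hD : 0 <= \sum_(0 <= j < k) D j.
  have -> : \sum_(0 <= j < k) D j =
     \sum_(0 <= j < k) gamma ^+ j * (Ak alpha (k - j) * Ur j + UE j)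
     - \sum_(0 <= j < k) gamma ^+ j * (Ak alpha (k - j) * Lr j + LE j).
    by rewrite -sumrB; apply: eq_bigr => j _; rewrite /D; ring.
  rewrite -h1 subr_ge0; exact: le_trans h2 h3.
set Lj := fun j => gamma ^+ j * (Lr j - Ur j) - (1 - alpha) * (gamma ^+ j * (UE j - LE j))
                   - 2 * (gamma ^+ j * alpha ^+ (k - j)).
have hLj : forall j, Lj j <= - ((1 - alpha) * D j).
  move=> j.
  have e : (1 - alpha) * D j = gamma ^+ j * ((1 - alpha ^+ (k - j)) * (Ur j - Lr j)
                                + (1 - alpha) * (UE j - LE j)).
    by rewrite /D -Ak_eq; ring.
  have e2 : Lj j + (1 - alpha) * D j = (gamma ^+ j * alpha ^+ (k - j)) * (Lr j - Ur j - 2).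
    by rewrite e /Lj; ring.
  have p1 : 0 <= gamma ^+ j * alpha ^+ (k - j) by rewrite mulr_ge0 // exprn_ge0.
  have p2 : Lr j - Ur j - 2 <= 0.
    have := hU j; have := hL j; rewrite !ler_norml => /andP[? ?] /andP[? ?]; lra.
  have := mulr_ge0_le0 p1 p2; rewrite -e2; lra.
have hsum : \sum_(0 <= j < k) Lj j <= 0.
  apply: (le_trans (ler_sum _ (fun j _ => hLj j))).
  rewrite sumrN -mulr_sumr oppr_le0; apply: mulr_ge0 => //; lra.
have eS : \sum_(0 <= j < k) Lj j =
   (\sum_(0 <= j < k) gamma ^+ j * Lr j - \sum_(0 <= j < k) gamma ^+ j * Ur j)
   - (1 - alpha) * \sum_(0 <= j < k) gamma ^+ j * (UE j - LE j) - 2 * Bk gamma alpha k.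
  rewrite /Lj /Bk !sumrB !mulr_sumr; congr (_ - _ - _).
  by rewrite -sumrB; apply: eq_bigr => j _; ring.
have hAi : (A_inf alpha)^-1 = 1 - alpha by rewrite /A_inf invrK.
have hH : H gamma * (1 - gamma) = 1 by rewrite /H mulVf // subr_eq0 gt_eqF.
have hB1 := Agk_i gamma alpha k.
have hB2 := Agk_ii gamma alpha k.
have eG : 2 * H gamma * (alpha ^+ k + A_gk gamma alpha k / A_inf alpha)
        = 2 * Bk gamma alpha k + 2 * gamma ^+ k * H gamma.
  rewrite hAi.
  have -> : alpha ^+ k + A_gk gamma alpha k * (1 - alpha)
          = (1 - gamma) * Bk gamma alpha k + gamma ^+ k by lra.
  have hb : H gamma * ((1 - gamma) * Bk gamma alpha k) = Bk gamma alpha k by rewrite mulrA hH mul1r.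
  rewrite /H; field; by rewrite subr_eq0 gt_eqF.
rewrite eG hAi h4 h5.
have gk : 0 <= gamma ^+ k by rewrite exprn_ge0.
have hT : gamma ^+ k * T1 - gamma ^+ k * T2 <= 2 * gamma ^+ k * H gamma.
  have := ler_wpM2l gk hT1; have := ler_wpM2l gk hT2; lra.
lra.
Qed.

End Alg2.


Section Unr.
Variables (R : realType) (X A : finType).
Variables (P : X -> A -> X -> R) (r : X -> A -> R) (gamma : R) (g : nat -> X -> A).
Hypothesis hP : is_kernel P.

Local Notation pol := (pol_ R g).

Definition polL (pi : X -> A -> R) (q : X -> A -> R) : X -> A -> R := fun x _ => polapp pi q x.

Lemma polL_good pi : is_policy pi -> good (polL pi).
Proof.
move=> hpi; split.
- move=> c1 c2 q1 q2; rewrite /polL polapp_lin //.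
- move=> q1 q2 h x a; exact: polapp_mono.
- move=> c; apply/funext => x; apply/funext => a; exact: polapp_cst.
Qed.

Lemma T_unroll n q : Tchain P r gamma g n q =
  fun x a => \sum_(0 <= j < n) gamma ^+ j * Pchain P g (n.+1 - j) j r x a
             + gamma ^+ n * Pchain P g 1 n q x a.
Proof.
elim: n => [|n IH].
  by apply/funext => x; apply/funext => a; rewrite big_geq // expr0 mul1r add0r.
have -> : Tchain P r gamma g n.+1 q = Tpi P r gamma (pol n.+1) (Tchain P r gamma g n q) by [].
rewrite IH /Tpi.
have gp := Ppi_good hP (hpol R g n.+1).
rewrite (goodD gp (fun x a => \sum_(0 <= j < n) gamma ^+ j * Pchain P g (n.+1 - j) j r x a)
                  (fun x a => gamma ^+ n * Pchain P g 1 n q x a)).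
rewrite (goodS gp (index_iota 0 n) (fun j x a => gamma ^+ j * Pchain P g (n.+1 - j) j r x a)).
rewrite (goodZ gp).
apply/funext => x; apply/funext => a.
rewrite big_nat_recl // subn0 expr0 mul1r /=.
rewrite mulrDr addrA; congr (_ + _ + _).
  rewrite mulr_sumr; apply: eq_big_nat => j /andP[_ hj].
  rewrite (goodZ gp) subSS subnK; first by rewrite exprS mulrA.
  by apply: ltnW; apply: ltnW.
by rewrite add1n exprS mulrA.
Qed.

Lemma unroll_fix (L : (X -> A -> R) -> X -> A -> R) q : good L ->
  q = (fun x a => r x a + gamma * L q x a) -> forall k,
  q = fun x a => \sum_(0 <= j < k) gamma ^+ j * iter j L r x a + gamma ^+ k * iter k L q x a.
Proof.
move=> gL hq; elim=> [|k IH].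
  by apply/funext => x; apply/funext => a; rewrite big_geq // expr0 mul1r add0r.
have e : iter k L q = iter k L (fun x a => r x a + gamma * L q x a) by rewrite -hq.
have gi := good_iter k gL.
rewrite {1}IH e (goodD gi r (fun x a => gamma * L q x a)) (goodZ gi).
apply/funext => x; apply/funext => a.
rewrite big_nat_recr //= exprS -iterSr (_ : iter k.+1 L q = L (iter k L q)) //; ring.
Qed.

End Unr.


Unset Implicit Arguments.

Theorem lemma1 (R : realType) (X A : finType) (a0 : A)
  (P : X -> A -> X -> R) (r : X -> A -> R) (gamma alpha : R) (K M : nat)
  (y : nat -> 'I_M -> X -> A -> X) (g : nat -> X -> A) (pistar : X -> A -> R) :
  is_kernel P ->
  (forall x a, -1 <= r x a <= 1) ->
  0 <= gamma < 1 ->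
  0 <= alpha < 1 ->
  (0 < K)%N -> (0 < M)%N ->
  is_optimal P r gamma pistar ->
  (forall k, (k <= K)%N -> forall x a,
      s_ r gamma alpha a0 y k x a <= s_ r gamma alpha a0 y k x (g k x)) ->
  forall k, (1 <= k <= K)%N -> forall x,
    0 <= vpi P r gamma pistar x - v_nonstat P r gamma g k x /\
    vpi P r gamma pistar x - v_nonstat P r gamma g k x
      <= Gamma_ P r gamma alpha a0 y g pistar k x.
Proof.
move=> hP hr hg ha _ _ hopt hgr k /andP[hk1 hkK] x.
case: k hk1 hkK => [//|k] _ hkK.
have hps : is_policy pistar by case: hopt.
have g0 : 0 <= gamma by case/andP: hg.
set qs := qpi P r gamma pistar.
set pol := pol_ R g.
set q0 := qpi P r gamma (pol 0).
have hqv := q_le_v hP hr hg hopt.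
have hpk : is_policy (pol k.+1) := hpol R g k.+1.
have fixs : qs = fun x a => r x a + gamma * Papp P (vpi P r gamma pistar) x a.
  exact: (qpi_fix hP hr hg hps).
have fix0 : q0 = fun x a => r x a + gamma * Ppi P (pol 0) q0 x a.
  exact: (qpi_fix hP hr hg (hpol R g 0)).
split.
  have hT : forall n x a, Tchain P r gamma g n q0 x a <= qs x a.
    elim=> [|n IH] x1 a1.
      rewrite /= fix0 fixs lerD2l; apply: ler_wpM2l => //.
      apply: Papp_mono => // z; have := (proj2 hopt) (pol 0) (hpol R g 0) z; by [].
    have -> : Tchain P r gamma g n.+1 q0 x1 a1
       = r x1 a1 + gamma * Papp P (polapp (pol n.+1) (Tchain P r gamma g n q0)) x1 a1 by [].
    rewrite fixs lerD2l; apply: ler_wpM2l => //; apply: Papp_mono => // z.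
    apply: (le_trans (polapp_mono (hpol R g n.+1) IH z)).
    by rewrite detpol_app; apply: hqv.
  rewrite subr_ge0 /v_nonstat.
  apply: (le_trans (polapp_mono hpk (hT k) x)).
  by rewrite detpol_app; apply: hqv.
set PS := Ppi P pistar.
set E := E_ P r gamma alpha a0 y.
set sk := s_ r gamma alpha a0 y k.+1.
have gS := Ppi_good hP hps.
have gpk := polL_good hpk.
have gps := polL_good hps.
have hF : forall m, F P r gamma alpha a0 y m = fun x a => Ak alpha m * r x a + 1 * E m x a.
  by move=> m; apply/funext=> ?; apply/funext=> ?; rewrite mul1r.
have hrb : forall x a, `|r x a| <= 1 by move=> x1 a1; rewrite ler_norml; apply: hr.
rewrite /Gamma_. Show.
have FA := final_alg hg ha
  (k := k.+1)
  (Ur := fun j => polapp (pol k.+1) (Pchain P g (k.+1 - j)%N j r) x)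
  (Lr := fun j => polapp pistar (iter j PS r) x)
  (UE := fun j => polapp (pol k.+1) (Pchain P g (k.+1 - j)%N j (E (k.+1 - j)%N)) x)
  (LE := fun j => polapp pistar (iter j PS (E (k.+1 - j)%N)) x)
  (T1 := polapp pistar (iter k.+1 PS qs) x)
  (T2 := polapp (pol k.+1) (Pchain P g 1 k (Ppi P (pol 0) q0)) x)
  (vs := vpi P r gamma pistar x) (vp := v_nonstat P r gamma g k.+1 x)
  (skU := polapp (pol k.+1) sk x) (skL := polapp pistar sk x).
apply: FA.
- change (polL (pol k.+1) sk x a0 = \sum_(0 <= j < k.+1) gamma ^+ j *
     (Ak alpha (k.+1 - j)%N * polL (pol k.+1) (Pchain P g (k.+1 - j)%N j r) x a0
      + polL (pol k.+1) (Pchain P g (k.+1 - j)%N j (E (k.+1 - j)%N)) x a0)).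
  rewrite /sk (s_unroll hP hgr hkK).
  rewrite (goodS gpk (index_iota 0 k.+1)
     (fun j x a => gamma ^+ j * Pchain P g (k.+1 - j)%N j (F P r gamma alpha a0 y (k.+1 - j)%N) x a)).
  apply: eq_big_nat => j _.
  rewrite (goodZ gpk) hF (gL1 (Pchain_good g hP _ _)) (gL1 gpk) /= mul1r //.
- have hl := s_lower hP hg hgr hps hkK.
  have H2 := @gL2 _ _ _ _ gps _ _ hl x a0.
  rewrite (goodS gps (index_iota 0 k.+1)
     (fun j x a => gamma ^+ j * iter j PS (F P r gamma alpha a0 y (k.+1 - j)%N) x a)) in H2.
  apply: le_trans H2; rewrite le_eqVlt; apply/orP; left; apply/eqP.
  apply: eq_big_nat => j _.
  by rewrite (goodZ gps) hF (gL1 (good_iter j gS)) (gL1 gps) /= mul1r.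
- rewrite detpol_app /polapp.
  rewrite (_ : sk x (g k.+1 x) = \sum_(b : A) pistar x b * sk x (g k.+1 x)).
    apply: ler_sum => b _; apply: ler_wpM2l; first exact: hps.1.
    exact: hgr hkK x b.
  by rewrite -mulr_suml hps.2 mul1r.
- have e := unroll_fix (L := PS) gS fixs k.+1.
  change (polL pistar qs x a0 = \sum_(0 <= j < k.+1) gamma ^+ j * polL pistar (iter j PS r) x a0
     + gamma ^+ k.+1 * polL pistar (iter k.+1 PS qs) x a0).
  rewrite {1}e.
  rewrite (goodD gps (fun x a => \sum_(0 <= j < k.+1) gamma ^+ j * iter j PS r x a)
                     (fun x a => gamma ^+ k.+1 * iter k.+1 PS qs x a)).
  rewrite (goodS gps (index_iota 0 k.+1) (fun j x a => gamma ^+ j * iter j PS r x a)) (goodZ gps) /=.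
  congr (_ + _); apply: eq_big_nat => j _; by rewrite (goodZ gps).
- have := good_bound (good_comp gps (good_iter k.+1 gS)) (qpi_bound hP hr hg hps) x a0.
  by rewrite ler_norml => /andP[_ h].
- change (polL (pol k.+1) (Tchain P r gamma g k q0) x a0 = \sum_(0 <= j < k.+1) gamma ^+ j *
     polL (pol k.+1) (Pchain P g (k.+1 - j)%N j r) x a0
     + gamma ^+ k.+1 * polL (pol k.+1) (Pchain P g 1 k (Ppi P (pol 0) q0)) x a0).
  have gc1 := Pchain_good g hP 1 k.
  have e0 : Pchain P g 1 k q0 = fun x a => Pchain P g 1 k r x a + gamma * Pchain P g 1 k (Ppi P (pol 0) q0) x a.
    rewrite {1}fix0.
    by rewrite (goodD gc1 r (fun x a => gamma * Ppi P (pol 0) q0 x a)) (goodZ gc1).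
  rewrite (T_unroll r gamma g hP k q0).
  rewrite (goodD gpk (fun x a => \sum_(0 <= j < k) gamma ^+ j * Pchain P g (k.+1 - j)%N j r x a)
                     (fun x a => gamma ^+ k * Pchain P g 1 k q0 x a)).
  rewrite (goodZ gpk) e0.
  rewrite (goodD gpk (Pchain P g 1 k r) (fun x a => gamma * Pchain P g 1 k (Ppi P (pol 0) q0) x a)).
  rewrite (goodZ gpk) /=.
  rewrite (goodS gpk (index_iota 0 k) (fun j x a => gamma ^+ j * Pchain P g (k.+1 - j)%N j r x a)).
  rewrite big_nat_recr //= subSnn.
  have eS : \sum_(0 <= j < k) polL (pol k.+1) (fun x a => gamma ^+ j * Pchain P g (k.+1 - j)%N j r x a) x a0
     = \sum_(0 <= j < k) gamma ^+ j * polL (pol k.+1) (Pchain P g (k.+1 - j)%N j r) x a0.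
    by apply: eq_big_nat => j _; rewrite (goodZ gpk).
  rewrite eS exprS; ring.
- have := good_bound (good_comp gpk (good_comp (Pchain_good g hP 1 k) (Ppi_good hP (hpol R g 0))))
     (qpi_bound hP hr hg (hpol R g 0)) x a0.
  by rewrite ler_norml => /andP[h _].
- move=> j; exact: (good_bound (good_comp gpk (Pchain_good g hP _ _)) hrb x a0).
- move=> j; exact: (good_bound (good_comp gps (good_iter j gS)) hrb x a0).
Qed.
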